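(* Let $q\ge 2$, $n\ge 1$ and $\varepsilon\in\mathbb{N}$ with $\varepsilon\le n$. Let $x\in\mathbb{Z}_q^n$ be a hidden vector, and suppose the attacker has access to an oracle $\texttt{Match}_{x,\varepsilon}$ which, on a query $y\in\mathbb{Z}_q^n$, returns $1$ if $d(x,y)\le\varepsilon$ and $0$ otherwise, and which additionally reveals the value $d(x,y)$ whenever $d(x,y)\le\varepsilon$. Then there is an adaptive query strategy that recovers $x$ using, in the worst case, $\mathcal{O}(q^{n-\varepsilon}+q\varepsilon)$ queries to $\texttt{Match}_{x,\varepsilon}$.
   Context: $\mathbb{Z}_q^n=\{0,\dots,q-1\}^n$ is equipped with the Hamming distance $d(x,y)=|\{i\in\{1,\dots,n\}: x_i\neq y_i\}|$. The attacker may choose each query adaptively based on previous oracle answers; complexity is measured as the number of oracle queries. *)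

(* Defs.v *)
From mathcomp Require Import all_boot.
Set Implicit Arguments. Unset Strict Implicit. Unset Printing Implicit Defensive.

Definition vec (q n : nat) := {ffun 'I_n -> 'I_q}.

Definition hamming (q n : nat) (x y : vec q n) : nat := #|[set i | x i != y i]|.

(* The oracle Match_{x,eps}: on query y, answers None (= bit 0) if d(x,y) > eps,
   and Some d(x,y) (= bit 1 together with the revealed distance) otherwise. *)
Definition match_oracle (q n eps : nat) (x : vec q n) (y : vec q n) : option nat :=
  if hamming x y <= eps then Some (hamming x y) else None.

(* Adaptive query strategies: finite decision trees. A node queries a vector and
   branches on the oracle's answer; a leaf outputs the guess. *)
Inductive strategy (T : Type) : Type :=
  | Output (x : T)
  | Query (y : T) (k : option nat -> strategy T).

Fixpoint run (T : Type) (oracle : T -> option nat) (s : strategy T) : T * nat :=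
  match s with
  | Output x => (x, 0)
  | Query y k => let r := run oracle (k (oracle y)) in (r.1, r.2.+1)
  end.

(* Main.v *)
Require Import Defs.
From mathcomp Require Import all_boot.
From mathcomp Require Import zify.
Set Implicit Arguments. Unset Strict Implicit. Unset Printing Implicit Defensive.

Fixpoint queries (T : Type) (ys : seq T) (k : seq (option nat) -> strategy T) : strategy T :=
  match ys with
  | [::] => k [::]
  | y :: ys' => Query y (fun a => queries ys' (fun l => k (a :: l)))
  end.

Lemma run_queries (T : Type) (O : T -> option nat) ys k :
  run O (queries ys k) = ((run O (k (map O ys))).1, (run O (k (map O ys))).2 + size ys).
Proof.
elim: ys k => [|y ys IH] k /=; first by case: (run O (k [::])) => a b; rewrite addn0.
by rewrite IH /= addnS.
Qed.

Section S.
Variables (q n eps : nat) (c0 : 'I_q).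

Definition upd (y : vec q n) (i : 'I_n) (c : 'I_q) : vec q n :=
  [ffun j => if j == i then c else y j].

Definition key (a : option nat) : nat := if a is Some m then m else eps.+1.

Definition lookup (ans : seq (option nat)) (c : 'I_q) := nth None ans (index c (enum 'I_q)).

Definition choose (ans : seq (option nat)) : 'I_q :=
  [arg min_(c < c0) key (lookup ans c)].

Fixpoint phase2 (ls : seq 'I_n) (y : vec q n) : strategy (vec q n) :=
  match ls with
  | [::] => Output y
  | i :: ls' => queries [seq upd y i c | c <- enum 'I_q]
                  (fun ans => phase2 ls' (upd y i (choose ans)))
  end.

Definition ext (g : {ffun 'I_(n - eps) -> 'I_q}) : vec q n :=
  [ffun i : 'I_n => if insub (val i) is Some j then g j else c0].

Definition cands : seq (vec q n) := [seq ext g | g : {ffun 'I_(n - eps) -> 'I_q}].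

Definition strat : strategy (vec q n) :=
  queries cands (fun ans =>
    phase2 (enum 'I_n) (nth [ffun _ => c0] cands (find (fun a => a != None) ans))).

Variable x : vec q n.
Let O := match_oracle eps x.

Lemma key_O z : key (O z) = minn (hamming x z) eps.+1.
Proof.
rewrite /O /match_oracle /key; case: leqP => h /=; lia.
Qed.

Lemma lookup_map y i c :
  lookup (map O [seq upd y i c | c <- enum 'I_q]) c = O (upd y i c).
Proof.
rewrite /lookup -map_comp (nth_map c0) ?index_mem ?mem_enum //.
by rewrite nth_index ?mem_enum.
Qed.

Lemma ham_upd_eq y i : hamming x (upd y i (x i)) + (x i != y i) = hamming x y.
Proof.
rewrite /hamming.
have -> : [set j | x j != y j] = (if x i != y i then i |: [set j | x j != upd y i (x i) j]
                                  else [set j | x j != upd y i (x i) j]).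
  apply/setP => j; case: ifP => h; rewrite !inE /upd ffunE;
  case: (eqVneq j i) => [->|_] //=; rewrite ?eqxx ?h //.
case: ifP => h; last by rewrite addn0.
rewrite cardsU1 inE /upd ffunE eqxx eqxx /=; lia.
Qed.

Lemma ham_upd_ne y i c : c != x i -> hamming x (upd y i c) = (hamming x (upd y i (x i))).+1.
Proof.
move=> hc; rewrite /hamming.
have -> : [set j | x j != upd y i c j] = i |: [set j | x j != upd y i (x i) j].
  apply/setP => j; rewrite !inE /upd !ffunE; case: (eqVneq j i) => [->|_] //=.
  by rewrite eq_sym hc.
rewrite (cardsU1 i (finset (fun j => x j != upd y i (x i) j))).
by rewrite inE /upd ffunE !eqxx add1n.
Qed.

Lemma phase2_ok (ls : seq 'I_n) y : uniq ls -> hamming x y <= eps ->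
  (forall j, j \notin ls -> y j = x j) -> run O (phase2 ls y) = (x, size ls * q).
Proof.
elim: ls y => [|i ls IH] y /=.
  by move=> _ _ h; congr (_, _); apply/ffunP => j; rewrite h.
case/andP=> ni ui hy hj; rewrite run_queries.
have hc : choose (map O [seq upd y i c | c <- enum 'I_q]) = x i.
  rewrite /choose; case: arg_minnP => // c _ hmin.
  have := hmin (x i) isT; rewrite !lookup_map !key_O.
  have he := ham_upd_eq y i.
  have hu : hamming x (upd y i (x i)) <= eps.
    by rewrite -he in hy; exact: leq_trans (leq_addr _ _) hy.
  move=> hle; apply/eqP; apply: contraTT hle => hne.
  rewrite (ham_upd_ne y hne); lia.
rewrite hc IH //=; first by rewrite size_map size_enum_ord mulSn addnC.
- have he := ham_upd_eq y i.
  by rewrite -he in hy; exact: leq_trans (leq_addr _ _) hy.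
- move=> j hjn; rewrite /upd ffunE; case: (eqVneq j i) => [->//|hji].
  by apply: hj; rewrite inE negb_or hji.
Qed.

End S.

Lemma mq_le (q m : nat) : 2 <= q -> m * q <= q ^ m.
Proof.
move=> hq.
have h : forall k, k.+1 <= q ^ k.
  elim=> [|k IH]; first by rewrite expn0.
  rewrite expnS; nia.
case: m => [|k]; first by rewrite mul0n.
rewrite expnS mulnC; exact: leq_mul (leqnn q) (h k).
Qed.

Theorem theorem1 :
  exists C : nat, forall q n eps : nat, 2 <= q -> 1 <= n -> eps <= n ->
    exists s : strategy (vec q n), forall x : vec q n,
      (run (match_oracle eps x) s).1 = x /\
      (run (match_oracle eps x) s).2 <= C * (q ^ (n - eps) + q * eps).
Proof.
exists 2 => q n eps hq hn he.
have q0 : 0 < q by apply: leq_trans hq.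
pose c0 : 'I_q := Ordinal q0.
exists (strat n eps c0) => x.
set O := match_oracle eps x.
rewrite /strat run_queries.
set y0 := nth _ _ _.
have hy0 : hamming x y0 <= eps.
  pose g : {ffun 'I_(n - eps) -> 'I_q} := [ffun j => x (widen_ord (leq_subr eps n) j)].
  have hg : hamming x (@ext q n eps c0 g) <= eps.
    rewrite /hamming cardE.
    apply: (@leq_trans (size (iota (n - eps) eps))); last by rewrite size_iota.
    rewrite -(size_map val).
    apply: uniq_leq_size; first by rewrite map_inj_uniq ?enum_uniq //; exact: val_inj.
    move=> k /mapP [j]; rewrite mem_enum inE /ext ffunE => hj ->.
    rewrite mem_iota; move: hj; case: insubP => [j' hlt hv|hnlt] /=.
      rewrite /g ffunE; have -> : widen_ord (leq_subr eps n) j' = j by apply: val_inj.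
      by rewrite eqxx.
    move=> _; have := ltn_ord j; rewrite -ltnNge in hnlt; move: hnlt; rewrite /=; lia.
  have hh : has (fun y => O y != None) (cands n eps c0).
    apply/hasP; exists (@ext q n eps c0 g); first by apply: map_f; rewrite mem_enum.
    by rewrite /O /match_oracle hg.
  have hf : find (fun a => a != None) (map O (cands n eps c0))
            = find (fun y => O y != None) (cands n eps c0) by rewrite find_map.
  have := nth_find [ffun _ => c0] hh.
  rewrite /y0 hf.
  by rewrite /O /match_oracle; case: leqP.
rewrite /O (@phase2_ok q n eps c0 x) ?enum_uniq //; last by move=> j; rewrite mem_enum.
split => //=.
rewrite size_enum_ord /cands size_map -cardE card_ffun !card_ord.
have hm := mq_le (n - eps) hq.
have -> : n * q = (n - eps) * q + eps * q by rewrite -mulnDl subnK.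
lia.
Qed.
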